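(* If $g\in\mathcal{G}_0^\infty$ and $\mathcal{P}$ is a finite partition with positive Shannon dynamical entropy $h(\eta,\mathcal{P})>0$, then $h(g,\mathcal{P})=\infty$.
   Context: $\mathcal{G}_0$ is the set of concave functions $g:[0,1]\to\mathbb{R}$ with $g(0)=\lim_{x\to0^+}g(x)=0$. Let $\eta(x)=-x\log x$ and $\eta(0)=0$. Define $\mathcal{G}_0^\infty=\{g\in\mathcal{G}_0:\lim_{x\to0^+}g(x)/\eta(x)=\infty\}$. $T$ is a measure-preserving map of a probability space $(X,\Sigma,\mu)$. For a finite measurable partition $\mathcal{P}$, let $\mathcal{P}_n=\bigvee_{i=0}^{n-1}T^{-i}\mathcal{P}$, $H(g,\mathcal{P})=\sum_{A\in\mathcal{P}}g(\mu(A))$, and $h(g,\mathcal{P})=\limsup_{n\to\infty}\frac1nH(g,\mathcal{P}_n)$. *)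

(* Defs.v *)
From Stdlib Require Import Reals Lra List.
Import ListNotations.
Open Scope R_scope.

Definition is_sigma_algebra {X : Type} (Sigma : (X -> Prop) -> Prop) : Prop :=
  Sigma (fun _ => True) /\
  (forall A, Sigma A -> Sigma (fun x => ~ A x)) /\
  (forall A : nat -> (X -> Prop), (forall n, Sigma (A n)) ->
      Sigma (fun x => exists n, A n x)).

Definition is_probability_measure {X : Type} (Sigma : (X -> Prop) -> Prop)
    (mu : (X -> Prop) -> R) : Prop :=
  (forall A, Sigma A -> 0 <= mu A) /\
  mu (fun _ => True) = 1 /\
  (forall A : nat -> (X -> Prop),
      (forall n, Sigma (A n)) ->
      (forall m n x, m <> n -> A m x -> A n x -> False) ->
      infinite_sum (fun n => mu (A n)) (mu (fun x => exists n, A n x))).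

Definition is_measure_preserving {X : Type} (Sigma : (X -> Prop) -> Prop)
    (mu : (X -> Prop) -> R) (T : X -> X) : Prop :=
  forall A, Sigma A -> Sigma (fun x => A (T x)) /\ mu (fun x => A (T x)) = mu A.

Definition is_finite_partition {X : Type} (Sigma : (X -> Prop) -> Prop)
    (P : list (X -> Prop)) : Prop :=
  Forall Sigma P /\
  (forall i j x, (i < length P)%nat -> (j < length P)%nat -> i <> j ->
      nth i P (fun _ => False) x -> nth j P (fun _ => False) x -> False) /\
  (forall x, exists A, In A P /\ A x).

(* P_n = P v T^{-1}P v ... v T^{-(n-1)}P, listed as all cells
   A_0 /\ T^{-1} A_1 /\ ... /\ T^{-(n-1)} A_{n-1} (empty cells included;
   they contribute g(0) = 0). *)
Fixpoint join_iter {X : Type} (T : X -> X) (P : list (X -> Prop)) (n : nat)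
    : list (X -> Prop) :=
  match n with
  | O => [fun _ => True]
  | S k => flat_map (fun C => map (fun A => fun x => C x /\ A (Nat.iter k T x)) P)
                    (join_iter T P k)
  end.

Definition H_g {X : Type} (mu : (X -> Prop) -> R) (g : R -> R)
    (P : list (X -> Prop)) : R :=
  fold_right Rplus 0 (map (fun A => g (mu A)) P).

Definition h_seq {X : Type} (mu : (X -> Prop) -> R) (T : X -> X) (g : R -> R)
    (P : list (X -> Prop)) (n : nat) : R :=
  / INR n * H_g mu g (join_iter T P n).

(* limsup_n a_n > r  (unfolded, allowing limsup = +oo) *)
Definition limsup_gt (a : nat -> R) (r : R) : Prop :=
  exists c, c > r /\ forall N, exists n, (n >= N)%nat /\ a n > c.

Definition limsup_infty (a : nat -> R) : Prop :=
  forall M N, exists n, (n >= N)%nat /\ a n > M.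

Definition eta (x : R) : R := if Rle_dec x 0 then 0 else - x * ln x.

Definition in_G0 (g : R -> R) : Prop :=
  (forall x y t, 0 <= x <= 1 -> 0 <= y <= 1 -> 0 <= t <= 1 ->
      t * g x + (1 - t) * g y <= g (t * x + (1 - t) * y)) /\
  g 0 = 0 /\
  (forall eps, eps > 0 -> exists delta, delta > 0 /\
      forall x, 0 < x -> x < delta -> x <= 1 -> Rabs (g x) < eps).

Definition in_G0_infty (g : R -> R) : Prop :=
  in_G0 g /\
  (forall M, exists delta, delta > 0 /\
      forall x, 0 < x -> x < delta -> x <= 1 -> g x / eta x > M).

(* Main.v *)
Require Import Defs.
From Stdlib Require Import Reals List.
From Stdlib Require Import Lra Lia FunctionalExtensionality PropExtensionality Classical.
Import ListNotations.
Open Scope R_scope.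

Lemma set_ext {X} (A B : X -> Prop) : (forall x, A x <-> B x) -> A = B.
Proof. intros H; apply functional_extensionality; intros x; apply propositional_extensionality; auto. Qed.

Lemma sig_empty {X} (Sigma : (X->Prop)->Prop) : is_sigma_algebra Sigma -> Sigma (fun _ => False).
Proof.
  intros [HT [HC _]].
  replace (fun _ : X => False) with (fun x : X => ~ True).
  - apply HC, HT.
  - apply set_ext; intros; tauto.
Qed.

Lemma sig_and {X} Sigma (A B : X -> Prop) : is_sigma_algebra Sigma -> Sigma A -> Sigma B ->
  Sigma (fun x => A x /\ B x).
Proof.
  intros Hs HA HB. pose proof Hs as [HT [HC HU]].
  set (C := fun n : nat => match n with O => fun x => ~ A x | _ => fun x => ~ B x end).
  assert (HCm : forall n, Sigma (C n)) by (intros [|n]; simpl; apply HC; auto).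
  specialize (HC _ (HU C HCm)).
  replace (fun x => A x /\ B x) with (fun x => ~ (exists n, C n x)); [exact HC|].
  apply set_ext; intros x; split.
  - intros H. split; apply NNPP; intros H'; apply H.
    + exists 0%nat; exact H'.
    + exists 1%nat; exact H'.
  - intros [Ha Hb] [[|n] Hn]; simpl in Hn; auto.
Qed.

Lemma sig_iter {X} Sigma mu (T:X->X) k : is_measure_preserving Sigma mu T ->
  forall A, Sigma A -> Sigma (fun x => A (Nat.iter k T x)).
Proof.
  intros HT. induction k as [|k IH]; intros A HA; [exact HA|].
  exact (IH (fun y => A (T y)) (proj1 (HT A HA))).
Qed.

Lemma mu_empty {X} Sigma (mu:(X->Prop)->R) : is_sigma_algebra Sigma ->
  is_probability_measure Sigma mu -> mu (fun _ => False) = 0.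
Proof.
  intros Hs [Hpos [H1 Hadd]].
  pose proof (sig_empty Sigma Hs) as He.
  specialize (Hadd (fun _ => fun _ => False) (fun _ => He) ltac:(intros; contradiction)).
  replace (fun x : X => exists n : nat, False) with (fun _:X => False) in Hadd
    by (apply set_ext; intros; split; [tauto| intros [_ []]]).
  pose proof (Hpos _ He) as Ha.
  cbv beta in Hadd.
  remember (mu (fun _ => False)) as a.
  assert (Hs_: forall n, sum_f_R0 (fun _ : nat => a) n = INR (S n) * a).
  { induction n; simpl sum_f_R0.
    - simpl; ring.
    - rewrite IHn, (S_INR (S n)). ring. }
  destruct (Req_dec a 0) as [|Hn0]; auto. exfalso.
  destruct (Hadd (a/2)) as [N HN]; [lra|].
  pose proof (HN N (le_n _)) as A1. pose proof (HN (S N) (le_S _ _ (le_n _))) as A2.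
  unfold R_dist in *. rewrite Hs_ in A1, A2.
  apply Rabs_def2 in A1. apply Rabs_def2 in A2.
  rewrite (S_INR (S N)) in A2. lra.
Qed.

Lemma sum_list {X} (mu : (X->Prop)->R) (L : list (X->Prop)) : mu (fun _ => False) = 0 ->
  forall n, (length L <= S n)%nat ->
  sum_f_R0 (fun k => mu (nth k L (fun _ => False))) n = fold_right Rplus 0 (map mu L).
Proof.
  intros H0. induction L as [|a L IH]; intros n Hn.
  - induction n; simpl.
    + rewrite H0; ring.
    + simpl in IHn. rewrite IHn by (simpl; lia). rewrite H0; ring.
  - destruct n.
    + simpl in Hn. destruct L; simpl in Hn; [|lia]. simpl. ring.
    + rewrite decomp_sum by lia. simpl pred.
      change (sum_f_R0 (fun i : nat => mu (nth (S i) (a :: L) (fun _ : X => False))) n)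
        with (sum_f_R0 (fun k => mu (nth k L (fun _ => False))) n).
      rewrite IH by (simpl in Hn; lia). simpl. ring.
Qed.

Lemma fin_add {X} Sigma (mu:(X->Prop)->R) (L : list (X->Prop)) :
  is_sigma_algebra Sigma -> is_probability_measure Sigma mu -> Forall Sigma L ->
  (forall i j x, (i < length L)%nat -> (j < length L)%nat -> i <> j ->
     nth i L (fun _ => False) x -> nth j L (fun _ => False) x -> False) ->
  mu (fun x => exists A, In A L /\ A x) = fold_right Rplus 0 (map mu L).
Proof.
  intros Hs Hp HF Hd. pose proof (mu_empty Sigma mu Hs Hp) as H0.
  destruct Hp as [_ [_ Hadd]].
  assert (Hm : forall n, Sigma (nth n L (fun _ => False))).
  { intros n. destruct (Nat.lt_ge_cases n (length L)).
    - rewrite Forall_forall in HF. apply HF, nth_In; auto.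
    - rewrite nth_overflow by auto. apply sig_empty; auto. }
  assert (Hdis : forall m n x, m <> n -> nth m L (fun _ => False) x ->
                   nth n L (fun _ => False) x -> False).
  { intros m n x Hmn H1 H2.
    destruct (Nat.lt_ge_cases m (length L)); [|rewrite nth_overflow in H1 by auto; exact H1].
    destruct (Nat.lt_ge_cases n (length L)); [|rewrite nth_overflow in H2 by auto; exact H2].
    eapply Hd; eauto. }
  specialize (Hadd _ Hm Hdis).
  replace (fun x => exists A, In A L /\ A x) with (fun x => exists n, nth n L (fun _ => False) x).
  2:{ apply set_ext; intros x; split.
      - intros [n Hn]. destruct (Nat.lt_ge_cases n (length L)).
        + exists (nth n L (fun _ => False)); split; auto. apply nth_In; auto.
        + rewrite nth_overflow in Hn by auto; contradiction.
      - intros [A [HA Ax]]. destruct (In_nth L A (fun _ => False) HA) as [n [_ Hn]].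
        exists n; rewrite Hn; auto. }
  remember (mu (fun x => exists n, nth n L (fun _ => False) x)) as l.
  remember (fold_right Rplus 0 (map mu L)) as Ssum.
  destruct (Req_dec l Ssum) as [|Hne]; auto. exfalso.
  destruct (Hadd (Rabs (Ssum - l))) as [N HN].
  { apply Rabs_pos_lt. lra. }
  specialize (HN (max N (length L)) (Nat.le_max_l _ _)).
  rewrite sum_list in HN by (auto; lia). unfold R_dist in HN. rewrite <- HeqSsum in HN. lra.
Qed.

Lemma fold_app (l1 l2 : list R) :
  fold_right Rplus 0 (l1 ++ l2) = fold_right Rplus 0 l1 + fold_right Rplus 0 l2.
Proof. induction l1; simpl; [ring|rewrite IHl1; ring]. Qed.

Lemma fold_flat {A B} (h : B -> R) (f : A -> list B) (L : list A) :
  fold_right Rplus 0 (map h (flat_map f L)) =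
  fold_right Rplus 0 (map (fun C => fold_right Rplus 0 (map h (f C))) L).
Proof. induction L; simpl; auto. rewrite map_app, fold_app, IHL. auto. Qed.

Lemma split_cell {X} Sigma mu (T : X -> X) P C k :
  is_sigma_algebra Sigma -> is_probability_measure Sigma mu ->
  is_measure_preserving Sigma mu T -> is_finite_partition Sigma P -> Sigma C ->
  fold_right Rplus 0 (map mu (map (fun A => fun x => C x /\ A (Nat.iter k T x)) P)) = mu C.
Proof.
  intros Hs Hp Hmp [HPs [HPd HPc]] HC.
  rewrite <- (fin_add Sigma mu _ Hs Hp).
  - f_equal. apply set_ext; intros x; split.
    + intros [A [HA Ax]]. apply in_map_iff in HA. destruct HA as [B [<- _]]. apply Ax.
    + intros Cx. destruct (HPc (Nat.iter k T x)) as [B [HB Bx]].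
      exists (fun x => C x /\ B (Nat.iter k T x)). split; auto.
      apply in_map_iff. exists B; auto.
  - apply Forall_forall. intros A HA. apply in_map_iff in HA. destruct HA as [B [<- HB]].
    apply sig_and; auto. apply (sig_iter Sigma mu); auto.
    rewrite Forall_forall in HPs; auto.
  - intros i j x Hi Hj Hij H1 H2. rewrite length_map in Hi, Hj.
    set (f := fun A : X -> Prop => fun x => C x /\ A (Nat.iter k T x)) in *.
    rewrite (nth_indep _ (fun _ => False) (f (fun _ => False))) in H1 by (rewrite length_map; auto).
    rewrite (nth_indep _ (fun _ => False) (f (fun _ => False))) in H2 by (rewrite length_map; auto).
    rewrite map_nth in H1, H2. unfold f in H1, H2.
    destruct H1 as [_ H1]; destruct H2 as [_ H2].
    eapply HPd; eauto.
Qed.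

Lemma join_meas {X} Sigma mu (T : X -> X) P n :
  is_sigma_algebra Sigma -> is_measure_preserving Sigma mu T -> is_finite_partition Sigma P ->
  Forall Sigma (join_iter T P n).
Proof.
  intros Hs Hmp HP. induction n; simpl.
  - constructor; [apply Hs|constructor].
  - apply Forall_forall. intros A HA. apply in_flat_map in HA. destruct HA as [C [HC HA]].
    apply in_map_iff in HA. destruct HA as [B [<- HB]].
    rewrite Forall_forall in IHn. apply sig_and; auto.
    apply (sig_iter Sigma mu); auto. destruct HP as [HPs _]. rewrite Forall_forall in HPs; auto.
Qed.

Lemma join_total {X} Sigma mu (T : X -> X) P n :
  is_sigma_algebra Sigma -> is_probability_measure Sigma mu ->
  is_measure_preserving Sigma mu T -> is_finite_partition Sigma P ->
  fold_right Rplus 0 (map mu (join_iter T P n)) = 1.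
Proof.
  intros Hs Hp Hmp HP. induction n.
  - simpl. destruct Hp as [_ [H1 _]]. rewrite H1. ring.
  - simpl join_iter. rewrite fold_flat. rewrite <- IHn. f_equal.
    apply map_ext_in. intros C HC. apply (split_cell Sigma); auto.
    pose proof (join_meas Sigma mu T P n Hs Hmp HP) as HF.
    rewrite Forall_forall in HF; auto.
Qed.

Lemma elem_le (l : list R) y : Forall (fun y => 0 <= y) l -> In y l -> y <= fold_right Rplus 0 l.
Proof.
  induction l; simpl; [tauto|]. intros HF [<-|Hin]; inversion HF; subst.
  - assert (0 <= fold_right Rplus 0 l).
    { clear -H2. induction l; simpl; [lra|]. inversion H2; subst. specialize (IHl H3). lra. }
    lra.
  - specialize (IHl H2 Hin). lra.
Qed.

Lemma sum_ineq {X} (mu : (X->Prop)->R) (L : list (X->Prop)) (f e : R->R) M K :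
  (forall A, In A L -> f (mu A) >= M * e (mu A) - K * mu A) ->
  fold_right Rplus 0 (map (fun A => f (mu A)) L) >=
  M * fold_right Rplus 0 (map (fun A => e (mu A)) L) - K * fold_right Rplus 0 (map mu L).
Proof.
  induction L; simpl; intros H; [lra|].
  pose proof (H a (or_introl eq_refl)).
  pose proof (IHL (fun A HA => H A (or_intror HA))). lra.
Qed.

Lemma key g M : in_G0_infty g -> 0 <= M ->
  exists K, forall x, 0 <= x <= 1 -> g x >= M * eta x - K * x.
Proof.
  intros [[Hconc [H0 _]] Hinf] HM.
  destruct (Hinf M) as [d0 [Hd0 Hd]].
  set (d := Rmin d0 (1/2)).
  assert (Hdp : 0 < d) by (unfold d; apply Rmin_glb_lt; lra).
  assert (Hd2 : d <= 1/2) by apply Rmin_r.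
  assert (Hdd0 : d <= d0) by apply Rmin_l.
  assert (Hlnd : ln d < 0) by (rewrite <- ln_1; apply ln_increasing; lra).
  exists (M * (- ln d) + Rabs (g 1)).
  intros x [Hx0 Hx1].
  assert (HK : 0 <= M * (- ln d) + Rabs (g 1)).
  { pose proof (Rabs_pos (g 1)). assert (0 <= M * (- ln d)) by (apply Rmult_le_pos; lra). lra. }
  destruct (Req_dec x 0) as [->|Hxn0].
  { rewrite H0. unfold eta. destruct (Rle_dec 0 0); [|lra]. lra. }
  assert (Hxp : 0 < x) by lra.
  destruct (Rlt_le_dec x d) as [Hxd|Hxd].
  - specialize (Hd x Hxp ltac:(lra) Hx1).
    unfold eta in *. destruct (Rle_dec x 0) as [|_]; [lra|].
    assert (Hlx : ln x < 0) by (rewrite <- ln_1; apply ln_increasing; lra).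
    set (e := - x * ln x) in *.
    assert (He : 0 < e) by (unfold e; nra).
    assert (Heq : g x = (g x / e) * e) by (field; lra).
    assert (g x / e * e > M * e) by (apply Rmult_gt_compat_r; auto).
    assert (0 <= (M * - ln d + Rabs (g 1)) * x) by (apply Rmult_le_pos; lra).
    lra.
  - unfold eta. destruct (Rle_dec x 0) as [|_]; [lra|].
    pose proof (Hconc 1 0 x ltac:(lra) ltac:(lra) ltac:(lra)) as Hc.
    replace (x * 1 + (1 - x) * 0) with x in Hc by ring. rewrite H0 in Hc.
    assert (Hl : ln d <= ln x).
    { destruct (Req_dec d x) as [->|]; [lra|]. left; apply ln_increasing; lra. }
    assert (0 <= M * (x * (ln x - ln d))) by (apply Rmult_le_pos; [lra|apply Rmult_le_pos; lra]).
    assert (- Rabs (g 1) * x <= g 1 * x).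
    { apply Rmult_le_compat_r; [lra|]. pose proof (Rle_abs (- g 1)). rewrite Rabs_Ropp in H1. lra. }
    lra.
Qed.

Theorem mainTheorem8 (X : Type) (Sigma : (X -> Prop) -> Prop)
    (mu : (X -> Prop) -> R) (T : X -> X) (g : R -> R) (P : list (X -> Prop)) :
  is_sigma_algebra Sigma ->
  is_probability_measure Sigma mu ->
  is_measure_preserving Sigma mu T ->
  in_G0_infty g ->
  is_finite_partition Sigma P ->
  limsup_gt (h_seq mu T eta P) 0 ->
  limsup_infty (h_seq mu T g P).
Proof.
  intros Hs Hp Hmp Hg HP [c [Hc Hinf]] M0 N0.
  set (M := (Rabs M0 + 1) / c).
  assert (HM : 0 < M) by (unfold M; apply Rdiv_lt_0_compat; [pose proof (Rabs_pos M0)|]; lra).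
  destruct (key g M Hg ltac:(lra)) as [K HK].
  destruct (INR_unbounded (Rabs K)) as [N1 HN1].
  destruct (Hinf (max N0 (S N1))) as [n [Hn Hh]].
  exists n. split; [lia|].
  unfold h_seq, H_g in *.
  pose proof (join_total Sigma mu T P n Hs Hp Hmp HP) as Htot.
  pose proof (join_meas Sigma mu T P n Hs Hmp HP) as Hmeas.
  assert (Hcell : forall A, In A (join_iter T P n) -> 0 <= mu A <= 1).
  { intros A HA. rewrite Forall_forall in Hmeas.
    destruct Hp as [Hpos _]. split; [apply Hpos; auto|].
    rewrite <- Htot. apply elem_le.
    - apply Forall_forall. intros y Hy. apply in_map_iff in Hy. destruct Hy as [B [<- HB]]. auto.
    - apply in_map; auto. }
  pose proof (sum_ineq mu (join_iter T P n) g eta M K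
                 (fun A HA => HK _ (Hcell A HA))) as Hsum.
  rewrite Htot in Hsum.
  set (Hgs := fold_right Rplus 0 (map (fun A => g (mu A)) (join_iter T P n))) in *.
  set (Hes := fold_right Rplus 0 (map (fun A => eta (mu A)) (join_iter T P n))) in *.
  assert (HnN : (S N1 <= n)%nat) by lia.
  apply le_INR in HnN. rewrite S_INR in HnN.
  assert (Hnpos : 0 < INR n) by (pose proof (pos_INR N1); lra).
  set (a := / INR n) in *.
  assert (Ha : 0 < a) by (apply Rinv_0_lt_compat; auto).
  assert (Han : a * INR n = 1) by (unfold a; field; lra).
  assert (HaK : a * K < 1).
  { pose proof (Rle_abs K). assert (a * K < a * INR n) by (apply Rmult_lt_compat_l; lra). lra. }
  assert (H1 : a * Hgs >= a * (M * Hes - K * 1)) by (apply Rmult_ge_compat_l; lra).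
  assert (H2 : M * (a * Hes) > M * c) by (apply Rmult_gt_compat_l; lra).
  assert (H3 : M * c = Rabs M0 + 1) by (unfold M; field; lra).
  pose proof (Rle_abs M0).
  assert (a * (M * Hes - K * 1) = M * (a * Hes) - a * K) by ring.
  lra.
Qed.
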